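(* Let $\Gamma$ be a finite marked graph with vertex set $V(\Gamma)=V_1\sqcup V_2$, and let $\Gamma_1,\Gamma_2$ be the induced subgraphs on $V_1,V_2$. Assume $h_1(\Gamma)=h_1(\Gamma_1)+h_1(\Gamma_2)$, where $h_1$ denotes the rank of the first homology group of a graph (viewed as a $1$-dimensional complex). Then $$\det\Gamma=\det\Gamma_1\cdot\det\Gamma_2+\sum_{k\ge1}\ \sum_{\{(u_1,v_1),\dots,(u_k,v_k)\}}(-1)^k\det(\Gamma_1-u_1-\dots-u_k)\cdot\det(\Gamma_2-v_1-\dots-v_k),$$ where the inner sum runs over all sets of $k$ pairwise vertex-disjoint edges $(u_i,v_i)$ of $\Gamma$ with $u_i\in V_1$, $v_i\in V_2$.
   Context: A marked graph is a finite graph without loops (multiple edges allowed) in which each vertex $v$ carries a real number $n_v$ (its mark). Its determinant $\det\Gamma$ is the determinant of the $V\times V$ matrix $M$ with $M_{vv}=n_v$ and $M_{uv}=-(\text{number of edges between }u\text{ and }v)$ for $u\ne v$. The determinant of the empty graph is $1$. For vertices $u_1,\dots,u_k$, $\Gamma-u_1-\dots-u_k$ denotes the induced subgraph on the remaining vertices. *)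

(* Defs.v *)
From HB Require Import structures.
From mathcomp Require Import all_boot all_order all_algebra.
Set Implicit Arguments. Unset Strict Implicit. Unset Printing Implicit Defensive.
Import Order.TTheory GRing.Theory Num.Theory.
Local Open Scope ring_scope.

(* A finite multigraph: vertex type V, edge type E, each edge e has
   endpoints (ends e).1 and (ends e).2 (loops are excluded by a hypothesis
   of the theorem).  Parallel edges are distinct elements of E. *)

Definition nedges (V E : finType) (ends : E -> V * V) (u v : V) : nat :=
  #|[set e : E | (ends e == (u, v)) || (ends e == (v, u))]|.

Definition gmx (R : ringType) (V E : finType) (n : V -> R) (ends : E -> V * V)
    (S : {set V}) : 'M[R]_#|S| :=
  \matrix_(i, j)
    if i == j then n (enum_val i)
    else - (nedges ends (enum_val i) (enum_val j))%:R.

Definition gdet (R : comRingType) (V E : finType) (n : V -> R) (ends : E -> V * V)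
    (S : {set V}) : R := \det (gmx n ends S).

Definition induced_edges (V E : finType) (ends : E -> V * V) (S : {set V})
  : {set E} := [set e | ((ends e).1 \in S) && ((ends e).2 \in S)].

(* boundary map C_1 -> C_0 of the graph with edge set F (as a 1-complex),
   rows indexed by the edges of F, columns by vertices *)
Definition boundary_mx (V E : finType) (ends : E -> V * V) (F : {set E})
  : 'M[rat]_(#|F|, #|V|) :=
  \matrix_(i, j)
    ((enum_val j == (ends (enum_val i)).2)%:R
     - (enum_val j == (ends (enum_val i)).1)%:R).

(* h_1 = rank of H_1 = rank of the cycle space ker (boundary) *)
Definition h1 (V E : finType) (ends : E -> V * V) (F : {set E}) : nat :=
  \rank (kermx (boundary_mx ends F)).

Definition endpoints (V E : finType) (ends : E -> V * V) (F : {set E})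
  : {set V} := [set v | [exists e in F, (v == (ends e).1) || (v == (ends e).2)]].

Definition cross_matching (V E : finType) (ends : E -> V * V) (V1 : {set V})
    (F : {set E}) : bool :=
  [forall e in F,
     (((ends e).1 \in V1) && ((ends e).2 \notin V1))
     || (((ends e).2 \in V1) && ((ends e).1 \notin V1))]
  && [forall e in F, forall f in F, (e != f) ==>
        [&& (ends e).1 != (ends f).1, (ends e).1 != (ends f).2,
            (ends e).2 != (ends f).1 & (ends e).2 != (ends f).2]].

(* Main.v *)
Require Import Defs.
From HB Require Import structures.
From mathcomp Require Import all_boot all_order all_algebra all_fingroup action.
Import Order.TTheory GRing.Theory Num.Theory.
Local Open Scope ring_scope.

Module Aux.
Set Implicit Arguments. Unset Strict Implicit. Unset Printing Implicit Defensive.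

Lemma sum_ev (R : nmodType) (T : finType) (F : {set T}) (G : T -> R) :
  \sum_(i < #|F|) G (enum_val i) = \sum_(e in F) G e.
Proof. by rewrite (big_enum_val (A := mem F)). Qed.
Lemma sum_evT (R : nmodType) (T : finType) (G : T -> R) :
  \sum_(i < #|T|) G (enum_val i) = \sum_e G e.
Proof. by rewrite (big_enum_val (A := mem T)). Qed.

Section LinAlg.
Variables (V E : finType) (ends : E -> V * V) (V1 : {set V}).
Hypothesis hh1 : h1 ends [set: E] =
   (h1 ends (induced_edges ends V1) + h1 ends (induced_edges ends (~: V1)))%N.

Definition bnd (e : E) (v : V) : rat :=
  (v == (ends e).2)%:R - (v == (ends e).1)%:R.
Definition cross (e : E) := ((ends e).1 \in V1) != ((ends e).2 \in V1).

Definition emb (F : {set E}) : 'M[rat]_(#|F|, #|[set: E]|) :=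
  \matrix_(i, j) (enum_val j == enum_val i :> E)%:R.

Lemma emb_bnd F : emb F *m boundary_mx ends [set: E] = boundary_mx ends F.
Proof.
apply/matrixP=> i v; rewrite !mxE.
rewrite (eq_bigr (fun j => (enum_val j == enum_val i :> E)%:R *
   bnd (enum_val j) (enum_val v))); last first.
  by move=> j _; rewrite !mxE.
rewrite (sum_ev [set: E] (fun e => (e == enum_val i :> E)%:R * bnd e (enum_val v))) /=.
rewrite (bigD1 (enum_val i)) ?inE //= eqxx mul1r big1 ?addr0 //.
by move=> e /andP [_ /negbTE ->]; rewrite mul0r.
Qed.

Lemma emb_out (F : {set E}) (a : 'rV[rat]_#|F|) (j : 'I_#|[set: E]|) : enum_val j \notin F -> (a *m emb F) 0 j = 0 :> rat.
Proof.
move=> hj; rewrite mxE big1 // => i _; rewrite mxE.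
case: eqP => [h|]; last by rewrite mulr0.
by move: hj; rewrite h enum_valP.
Qed.

Lemma emb_free F : row_free (emb F).
Proof.
rewrite /row_free eqn_leq rank_leq_row /=.
have h : (emb F *m (emb F)^T = 1%:M).
  apply/matrixP => i i'; rewrite !mxE.
  rewrite (eq_bigr (fun j => (enum_val j == enum_val i :> E)%:R * (enum_val j == enum_val i' :> E)%:R)); last first.
    by move=> j _; rewrite !mxE.
  rewrite (sum_ev [set: E] (fun e => (e == enum_val i :> E)%:R * (e == enum_val i' :> E)%:R)).
  rewrite (bigD1 (enum_val i)) ?inE //= eqxx mul1r big1 ?addr0.
    by rewrite (inj_eq enum_val_inj) eq_sym.
  by move=> x /andP [_ /negbTE ->]; rewrite mul0r.
apply: leq_trans (mxrankM_maxl _ (emb F)^T).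
by rewrite h mxrank1.
Qed.

Lemma L_indep (lam : E -> rat) :
  (forall v, \sum_e lam e * bnd e v = 0) -> forall e, cross e -> lam e = 0.
Proof.
move=> hl e ce.
set B := boundary_mx ends [set: E].
set F1 := induced_edges ends V1. set F2 := induced_edges ends (~: V1).
set K1 := kermx (boundary_mx ends F1) *m emb F1.
set K2 := kermx (boundary_mx ends F2) *m emb F2.
have sK1 : (K1 <= kermx B)%MS.
  by apply/sub_kermxP; rewrite /K1 -mulmxA emb_bnd mulmx_ker.
have sK2 : (K2 <= kermx B)%MS.
  by apply/sub_kermxP; rewrite /K2 -mulmxA emb_bnd mulmx_ker.
have disj : forall j : 'I_#|[set: E]|, enum_val j \notin F1 \/ enum_val j \notin F2.
  move=> j; rewrite /F1 /F2 /induced_edges !inE.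
  by case: ((ends (enum_val j)).1 \in V1); [right | left].
have cap0 : (K1 :&: K2)%MS = 0.
  apply/eqP; rewrite -submx0; apply/row_subP => i; rewrite submx0.
  have := row_sub i (K1 :&: K2)%MS; rewrite sub_capmx => /andP [h1' h2'].
  move/submxP: h1' => [a1 ha1]; move/submxP: h2' => [a2 ha2].
  apply/eqP/rowP => j; rewrite [RHS]mxE.
  case: (disj j) => hj.
    by rewrite ha1 /K1 mulmxA emb_out.
  by rewrite ha2 /K2 mulmxA emb_out.
have rk1 : \rank K1 = h1 ends F1.
  by rewrite /K1 mxrankMfree // emb_free.
have rk2 : \rank K2 = h1 ends F2.
  by rewrite /K2 mxrankMfree // emb_free.
have sK : (K1 + K2 <= kermx B)%MS by rewrite addsmx_sub sK1 sK2.
have eqK : (kermx B <= K1 + K2)%MS.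
  rewrite -(mxrank_leqif_sup sK) mxrank_disjoint_sum // rk1 rk2.
  by rewrite -hh1.
set u : 'rV[rat]_#|[set: E]| := \row_i lam (enum_val i).
have uB : (u <= kermx B)%MS.
  apply/sub_kermxP/rowP => v; rewrite !mxE.
  rewrite (eq_bigr (fun i => lam (enum_val i) * bnd (enum_val i) (enum_val v))); last first.
    by move=> i _; rewrite !mxE.
  rewrite (sum_ev [set: E] (fun e => lam e * bnd e (enum_val v))) /=.
  rewrite -[RHS](hl (enum_val v)); apply: eq_bigl => x; by rewrite inE.
have := submx_trans uB eqK => /sub_addsmxP [[a b] /= hu].
have eT : e \in [set: E] by rewrite inE.
have := congr1 (fun M : 'rV_ _ => M 0 (enum_rank_in eT e)) hu.
rewrite /u [X in X = _]mxE enum_rankK_in // => ->.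
rewrite /K1 /K2 !mulmxA [LHS]mxE.
have nF1 : e \notin induced_edges ends V1.
  rewrite /induced_edges !inE.
  move: ce; rewrite /cross; by case: ((ends e).1 \in V1); case: ((ends e).2 \in V1).
have nF2 : e \notin induced_edges ends (~: V1).
  rewrite /induced_edges !inE.
  move: ce; rewrite /cross; by case: ((ends e).1 \in V1); case: ((ends e).2 \in V1).
by rewrite !emb_out ?addr0 // enum_rankK_in.
Qed.

Definition adj (x y : V) (e : E) := (ends e == (x, y)) || (ends e == (y, x)).

Lemma sum_delta (G : E -> rat) e : \sum_g (g == e)%:R * G g = G e.
Proof.
rewrite (bigD1 e) //= eqxx mul1r big1 ?addr0 //.
by move=> g /negbTE ->; rewrite mul0r.
Qed.

Lemma par_cross e f : e != f -> cross e ->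
  (ends f == ends e) || (ends f == ((ends e).2, (ends e).1)) -> False.
Proof.
move=> nef ce hf.
pose o : rat := if ends f == ends e then 1 else -1.
pose lam g : rat := (g == e)%:R - o * (g == f)%:R.
have := @L_indep lam _ e ce.
have -> : lam e = 1 by rewrite /lam eqxx (negbTE nef) mulr0 subr0.
move=> /(_ _) h; suff : (1 : rat) = 0 by [].
apply: h => v.
rewrite (eq_bigr (fun g => (g == e)%:R * bnd g v - o * ((g == f)%:R * bnd g v))); last first.
  by move=> g _; rewrite /lam mulrBl mulrA.
rewrite sumrB -mulr_sumr !sum_delta /o /bnd.
case/orP: hf => /eqP ->. rewrite eqxx mul1r. apply/eqP; by rewrite subr_eq0.
case: (boolP ((((ends e).2, (ends e).1)) == ends e)) => [/eqP h|_].
  have h12 : (ends e).1 = (ends e).2 by rewrite -[in LHS]h.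
  by rewrite /= h12 !subrr ?mulr0 ?subr0.
rewrite /= mulN1r opprB; apply/eqP; by rewrite subr_eq0.
Qed.

Lemma nedges_le1 x y : (x \in V1) != (y \in V1) -> (nedges ends x y <= 1)%N.
Proof.
move=> cxy; rewrite leqNgt; apply/negP => /card_gt1P [e [f [he hf nef]]].
move: he hf; rewrite !inE => he hf.
apply: (par_cross nef).
  rewrite /cross; case/orP: he => /eqP -> //=.
  by move: cxy; case: (x \in V1); case: (y \in V1).
case/orP: he => /eqP ->; case/orP: hf => /eqP -> /=; by rewrite eqxx ?orbT.
Qed.

Lemma swap2 (s : {perm V}) :
  (forall y, s y != y -> (0 < nedges ends y (s y))%N) ->
  forall x, (x \in V1) != (s x \in V1) -> s (s x) = x.
Proof.
move=> good x cx.
have sx : s x != x by apply: contraNneq cx => ->.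
have := good x sx; rewrite card_gt0 => /set0Pn [e0 _].
pose G y := odflt e0 [pick e | adj y (s y) e].
have GP : forall y, s y != y -> adj y (s y) (G y).
  move=> y sy; rewrite /G; case: pickP => [e //|h].
  have := good y sy; rewrite card_gt0 => /set0Pn [e]; rewrite inE => he.
  by have := h e; rewrite /adj he.
pose o y : rat := if ends (G y) == (y, s y) then 1 else -1.
pose lam f : rat := \sum_(y | s y != y) (G y == f)%:R * o y.
have hl : forall v, \sum_e lam e * bnd e v = 0.
  move=> v.
  rewrite (eq_bigr (fun f => \sum_(y | s y != y) (f == G y)%:R * (o y * bnd f v))); last first.
    move=> f _; rewrite /lam mulr_suml; apply: eq_bigr => y _.
    by rewrite eq_sym mulrA.
  rewrite exchange_big /=.
  rewrite (eq_bigr (fun y => (v == s y)%:R - (v == y)%:R)); last first.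
    move=> y sy; rewrite sum_delta /o /bnd.
    case/orP: (GP y sy) => /eqP ->; first by rewrite eqxx mul1r.
    rewrite xpair_eqE (negbTE sy) /= mulN1r opprB //.
  rewrite sumrB (reindex_inj (@perm_inj _ s) (P := fun y => s y != y) (F := fun y => (v == y)%:R)) /=.
  under [X in _ - X]eq_bigl => j do rewrite (inj_eq perm_inj).
  by apply/eqP; rewrite subr_eq0.
have cG : cross (G x).
  rewrite /cross; case/orP: (GP x sx) => /eqP -> //=.
  by rewrite eq_sym.
have := L_indep hl cG.
apply: contra_eq => ssx.
rewrite /lam (bigD1 x) //= eqxx mul1r big1 ?addr0.
  by rewrite /o; case: ifP.
move=> y /andP [sy nyx].
case: eqP => [hG|]; last by rewrite mul0r.
exfalso; move: (GP y sy) (GP x sx); rewrite hG /adj.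
case/orP => /eqP ->; rewrite !xpair_eqE.
  case/orP => /andP [/eqP h1 /eqP h2].
    by move: nyx; rewrite h1 eqxx.
  by move: ssx; rewrite -h1 h2 eqxx.
case/orP => /andP [/eqP h1 /eqP h2].
  by move: ssx; rewrite -h2 h1 eqxx.
by move: nyx; rewrite h2 eqxx.
Qed.

End LinAlg.

Section Lift.
Variables (V : finType) (S : {set V}).

Definition liftf (s : 'S_#|S|) (x : V) : V :=
  if [pick i : 'I_#|S| | enum_val i == x] is Some i then enum_val (s i) else x.

Lemma liftf_ev s i : liftf s (enum_val i) = enum_val (s i).
Proof.
rewrite /liftf; case: pickP => [j /eqP /enum_val_inj -> //|].
by move=> /(_ i); rewrite eqxx.
Qed.

Lemma liftf_out s x : x \notin S -> liftf s x = x.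
Proof.
move=> xS; rewrite /liftf; case: pickP => [j /eqP hj|//].
by move: xS; rewrite -hj enum_valP.
Qed.

Lemma inS_ev x : x \in S -> exists i : 'I_#|S|, x = enum_val i.
Proof. by move=> xS; exists (enum_rank_in xS x); rewrite enum_rankK_in. Qed.

Lemma liftf_inj s : injective (liftf s).
Proof.
move=> x y.
case: (boolP (x \in S)) => [/inS_ev [i ->]|xS];
case: (boolP (y \in S)) => [/inS_ev [j ->]|yS].
- by rewrite !liftf_ev => /enum_val_inj /perm_inj ->.
- by rewrite liftf_ev liftf_out // => h; move: yS; rewrite -h enum_valP.
- by rewrite liftf_ev liftf_out // => h; move: xS; rewrite h enum_valP.
- by rewrite !liftf_out.
Qed.

Definition liftp s : {perm V} := perm (@liftf_inj s).

Lemma liftp_ev s i : liftp s (enum_val i) = enum_val (s i).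
Proof. by rewrite permE liftf_ev. Qed.
Lemma liftp_out s x : x \notin S -> liftp s x = x.
Proof. by move=> xS; rewrite permE liftf_out. Qed.

Lemma permS_eq (p q : {perm V}) : (forall i : 'I_#|S|, p (enum_val i) = q (enum_val i)) ->
  (forall x, x \notin S -> p x = q x) -> p = q.
Proof.
move=> h h'; apply/permP => x; case: (boolP (x \in S)) => [/inS_ev [i ->]|xS].
  exact: h.
exact: h'.
Qed.

Lemma liftp_inj : injective liftp.
Proof.
move=> s t h; apply/permP => i; apply: enum_val_inj.
by rewrite -!liftp_ev h.
Qed.

Lemma liftpM : {morph liftp : s t / (s * t)%g}.
Proof.
move=> s t; apply: permS_eq => [i|x xS]; first by rewrite !(permM, liftp_ev).
by rewrite permM !liftp_out.
Qed.

Lemma liftp1 : liftp 1%g = 1%g.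
Proof.
by apply: permS_eq => [i|x xS]; rewrite ?liftp_ev ?liftp_out // !perm1.
Qed.

Lemma liftp_tperm i j : liftp (tperm i j) = tperm (enum_val i) (enum_val j).
Proof.
apply/permP => x; case: (boolP (x \in S)) => [/inS_ev [k ->]|xS].
  by rewrite liftp_ev (inj_tperm _ _ _ enum_val_inj).
rewrite liftp_out // tpermD //.
  by apply: contraNneq xS => <-; rewrite enum_valP.
by apply: contraNneq xS => <-; rewrite enum_valP.
Qed.

Lemma odd_liftp s : odd_perm (liftp s) = odd_perm s.
Proof.
case: (prod_tpermP s) => ts -> dts.
rewrite (big_morph liftp liftpM liftp1).
under eq_bigr do rewrite liftp_tperm.
rewrite -(big_map (fun t => (enum_val t.1, enum_val t.2)) xpredT (fun t => tperm t.1 t.2)).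
rewrite !odd_perm_prod ?size_map //.
rewrite all_map; apply: sub_all dts => t /=.
by rewrite /dpair /= (inj_eq enum_val_inj).
Qed.

Lemma perm_on_liftp s : perm_on S (liftp s).
Proof.
apply/subsetP => x; rewrite inE; apply: contraNT => xS.
by rewrite liftp_out.
Qed.

Lemma im_liftp : [set liftp x | x in xpredT] = [set s | perm_on S s].
Proof.
apply/eqP; rewrite eqEcard; apply/andP; split.
  by apply/subsetP => s /imsetP [t _ ->]; rewrite inE perm_on_liftp.
rewrite card_imset; last exact: liftp_inj.
rewrite (eq_card (B := 'S_#|S|)) // card_Sn.
by rewrite (eq_card (B := perm_on S)) ?card_perm // => s; rewrite inE.
Qed.

Lemma sum_perm_on (R : nmodType) (f : {perm V} -> R) :
  \sum_(s | perm_on S s) f s = \sum_(t : 'S_#|S|) f (liftp t).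
Proof.
rewrite -(big_imset _ (in2W liftp_inj)) /=.
by rewrite im_liftp; apply: eq_bigl => s; rewrite inE.
Qed.
End Lift.

Section Det.
Variables (R : comRingType) (V E : finType) (n : V -> R) (ends : E -> V * V).

Definition mm (x y : V) : R := if x == y then n x else - (nedges ends x y)%:R.
Definition D (S : {set V}) : R :=
  \sum_(s : {perm V} | perm_on S s) (-1) ^+ s * \prod_(x in S) mm x (s x).

Lemma gdetE S : gdet n ends S = D S.
Proof.
rewrite /D sum_perm_on /gdet /determinant; apply: eq_bigr => t _.
rewrite odd_liftp; congr (_ * _).
rewrite (big_enum_val (A := mem S)) /=; apply: eq_bigr => i _.
by rewrite liftp_ev /gmx mxE /mm (inj_eq enum_val_inj).
Qed.
End Det.

Section Split.
Variables (R : comRingType) (V : finType) (m : V -> V -> R).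

Definition Dm (S : {set V}) : R :=
  \sum_(s : {perm V} | perm_on S s) (-1) ^+ s * \prod_(x in S) m x (s x).

Variables (A B : {set V}).
Hypothesis dAB : [disjoint A & B].

Lemma notB x : x \in A -> x \notin B.
Proof. by move=> xA; apply: contraL dAB => xB; apply/pred0Pn; exists x; apply/andP. Qed.

Lemma prodAB (p1 p2 : {perm V}) : perm_on A p1 -> perm_on B p2 ->
  forall x, (p1 * p2)%g x = if x \in A then p1 x else p2 x.
Proof.
move=> h1 h2 x; rewrite permM; case: ifP => xA.
  by rewrite (out_perm h2) // notB // (perm_closed _ h1).
by rewrite (out_perm h1) ?xA.
Qed.

Definition QAB (s : {perm V}) :=
  perm_on (A :|: B) s && [forall x, (s x \in A) == (x \in A)].

Lemma QAB_NA s : QAB s -> s \in ('N(A | 'P))%g.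
Proof. by case/andP => _ /forallP h; apply/astabsP => x /=; apply/eqP/h. Qed.

Lemma QAB_NB s : QAB s -> s \in ('N(B | 'P))%g.
Proof.
case/andP => hon /forallP h; apply/astabsP => x /=.
have hA := eqP (h x).
case: (boolP (x \in B)) => xB.
  have xA : x \notin A by apply: contraTN xB; apply: notB.
  have : s x \in A :|: B by rewrite (perm_closed _ hon) inE xB orbT.
  by rewrite inE hA (negbTE xA).
case: (boolP (x \in A)) => xA.
  by apply/negbTE/notB; rewrite hA.
by rewrite apermE (out_perm hon) ?(negbTE xB) // inE negb_or xA.
Qed.

Lemma split_sum :
  \sum_(s | QAB s) (-1) ^+ s * \prod_(x in A :|: B) m x (s x) = Dm A * Dm B.
Proof.
rewrite /Dm big_distrl /=.
under [RHS]eq_bigr do rewrite mulr_sumr.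
rewrite pair_big_dep /=.
rewrite (reindex_onto (fun p : {perm V} * {perm V} => (p.1 * p.2)%g)
   (fun s => (restr_perm A s, restr_perm B s))) /=; last first.
  move=> s Qs; apply/permP => x.
  rewrite prodAB ?restr_perm_on //.
  case: ifP => xA; first by rewrite restr_permE // QAB_NA.
  case: (boolP (x \in B)) => xB; first by rewrite restr_permE // QAB_NB.
  rewrite (out_perm (restr_perm_on _ _)) ?xB //.
  by case/andP: Qs => hon _; rewrite (out_perm hon) // inE xA.
apply: eq_big => [[p1 p2]|[p1 p2]] /=.
  apply/idP/idP.
    case/andP => _ /eqP [<- <-]; by rewrite !restr_perm_on.
  case/andP => h1 h2.
  have QQ : QAB (p1 * p2)%g.
    apply/andP; split.
      apply/subsetP => x; rewrite inE prodAB //.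
      case: ifP => xA; first by rewrite inE xA.
      move=> hx; rewrite inE; apply/orP; right.
      by apply: contraR hx => xB; rewrite (out_perm h2).
    apply/forallP => x; rewrite prodAB //.
    case: ifP => xA; first by rewrite (perm_closed _ h1) xA.
    case: (boolP (x \in B)) => xB.
      have : p2 x \in B by rewrite (perm_closed _ h2).
      move=> hB; have nA : p2 x \notin A by apply: contraTN hB; apply: notB.
      by rewrite (negbTE nA).
    by rewrite (out_perm h2) ?xA.
  rewrite QQ /=; apply/eqP; congr (_, _); apply/permP => x.
    case: (boolP (x \in A)) => xA.
      by rewrite restr_permE ?QAB_NA // prodAB // xA.
    by rewrite (out_perm (restr_perm_on _ _)) // (out_perm h1).
  case: (boolP (x \in B)) => xB.
    rewrite restr_permE ?QAB_NB // prodAB //.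
    by case: ifP => // xA; move: (notB xA); rewrite xB.
  by rewrite (out_perm (restr_perm_on _ _)) // (out_perm h2).
move=> /andP [_ /eqP [e1 e2]].
have h1 : perm_on A p1 by rewrite -e1 restr_perm_on.
have h2 : perm_on B p2 by rewrite -e2 restr_perm_on.
rewrite odd_permM signr_addb.
rewrite (eq_bigl [predU A & B]); last by move=> x; rewrite !inE.
rewrite bigU //.
rewrite (eq_bigr (fun x => m x (p1 x)) (P := fun x => x \in A)); last first.
  by move=> x xA; rewrite prodAB // xA.
rewrite (eq_bigr (fun x => m x (p2 x)) (P := fun x => x \in B)); last first.
  by move=> x xB; rewrite prodAB //; case: ifP => // xA; move: (notB xA); rewrite xB.
by rewrite mulrACA.
Qed.
End Split.

Section Tau.
Variable V : finType.
Definition pdisj (p q : V * V) :=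
  [&& p.1 != q.1, p.1 != q.2, p.2 != q.1 & p.2 != q.2].
Definition ep (l : seq (V * V)) x := has (fun p => (x == p.1) || (x == p.2)) l.
Definition taul (l : seq (V * V)) : {perm V} := (\prod_(p <- l) tperm p.1 p.2)%g.

Lemma taul_out l x : ~~ ep l x -> taul l x = x.
Proof.
elim: l => [|p l IH] /=; first by rewrite /taul big_nil perm1.
rewrite /ep /= negb_or negb_or => /andP [/andP [h1 h2] h3].
by rewrite /taul big_cons permM tpermD 1?eq_sym // IH.
Qed.

Lemma taul_in l : pairwise pdisj l -> forall p, p \in l -> taul l p.1 = p.2 /\ taul l p.2 = p.1.
Proof.
elim: l => [//|q l IH]; rewrite pairwise_cons => /andP [hq hl] p.
have nq : forall x, (x == q.1) || (x == q.2) -> ~~ ep l x.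
  move=> x hx; rewrite /ep -all_predC; apply/allP => r rl /=.
  have := allP hq r rl; rewrite /pdisj => /and4P [a b c d].
  by case/orP: hx => /eqP ->; rewrite negb_or ?a ?b ?c ?d.
rewrite inE => /orP [/eqP ->|pl].
  rewrite /taul big_cons !permM tpermL tpermR.
  by rewrite !taul_out // nq // eqxx ?orbT.
have [h1 h2] := IH hl p pl.
have := allP hq p pl; rewrite /pdisj => /and4P [a b c d].
rewrite /taul big_cons !permM !tpermD // 1?eq_sym //.
Qed.

Lemma taul_odd l : all (fun p : V * V => p.1 != p.2) l -> odd_perm (taul l) = odd (size l).
Proof. by move=> h; rewrite odd_perm_prod. Qed.

Lemma card_ep l : pairwise pdisj l -> all (fun p : V * V => p.1 != p.2) l ->
  #|[set x | ep l x]| = (2 * size l)%N.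
Proof.
elim: l => [|q l IH]; first by move=> _ _; rewrite muln0; apply/eqP; rewrite cards_eq0; apply/eqP/setP => x; rewrite !inE.
rewrite pairwise_cons => /andP [hq hl] /andP [dq dl].
have nq : forall x, (x == q.1) || (x == q.2) -> ~~ ep l x.
  move=> x hx; rewrite /ep -all_predC; apply/allP => r rl /=.
  have := allP hq r rl; rewrite /pdisj => /and4P [a b c d].
  by case/orP: hx => /eqP ->; rewrite negb_or ?a ?b ?c ?d.
have -> : [set x | ep (q :: l) x] = q.1 |: (q.2 |: [set x | ep l x]).
  by apply/setP => x; rewrite !inE /ep /= orbA.
rewrite !cardsU1 IH // !inE negb_or dq /= nq ?eqxx ?orbT //= nq ?eqxx ?orbT //.
by rewrite mulnS.
Qed.

Lemma pairwise_uniqP (T : eqType) (r : rel T) (l : seq T) :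
  uniq l -> (forall x y, x \in l -> y \in l -> x != y -> r x y) -> pairwise r l.
Proof.
elim: l => [//|a l IH] /andP [al ul] h.
rewrite pairwise_cons; apply/andP; split.
  apply/allP => y yl; apply: h; rewrite ?inE ?eqxx ?yl ?orbT //.
  by apply: contraNneq al => ->.
by apply: IH => // x y xl yl; apply: h; rewrite inE ?xl ?yl orbT.
Qed.
End Tau.

Section Main.
Variables (R : realFieldType) (V E : finType) (n : V -> R) (ends : E -> V * V) (V1 : {set V}).
Hypothesis noloop : forall e : E, (ends e).1 != (ends e).2.
Hypothesis hh1 : h1 ends [set: E] =
   (h1 ends (induced_edges ends V1) + h1 ends (induced_edges ends (~: V1)))%N.

Local Notation m := (mm n ends).
Local Notation crs := (cross ends V1).

Definition w (s : {perm V}) : R := (-1) ^+ s * \prod_x m x (s x).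

Lemma good s : w s != 0 -> forall y, s y != y -> (0 < nedges ends y (s y))%N.
Proof.
move=> ws y sy; rewrite lt0n; apply: contraNneq ws => h0.
rewrite /w (bigD1 y) //= /mm (eq_sym y) (negbTE sy) h0 oppr0 mul0r mulr0 //.
Qed.

Lemma cm_cross F e : cross_matching ends V1 F -> e \in F -> crs e.
Proof.
case/andP => /forallP h _ eF; have := h e; rewrite eF /= /cross.
by case/orP => /andP [-> /negbTE ->] //; case: ((ends e).1 \in V1).
Qed.

Lemma cm_disj F e f : cross_matching ends V1 F -> e \in F -> f \in F -> e != f ->
  pdisj (ends e) (ends f).
Proof.
case/andP => _ /forallP h eF fF nef; have := h e; rewrite eF /= => /forallP /(_ f).
by rewrite fF nef.
Qed.

Definition Phi (s : {perm V}) : {set E} :=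
  [set e | crs e && (s (ends e).1 == (ends e).2) && (s (ends e).2 == (ends e).1)].

Lemma Phi_cm s : cross_matching ends V1 (Phi s).
Proof.
apply/andP; split.
  apply/forallP => e; apply/implyP; rewrite inE => /andP [/andP [ce _] _].
  move: ce; rewrite /cross.
  by case: ((ends e).1 \in V1); case: ((ends e).2 \in V1).
apply/forallP => e; apply/implyP; rewrite inE => /andP [/andP [ce /eqP s1] /eqP s2].
apply/forallP => f; apply/implyP; rewrite inE => /andP [/andP [cf /eqP t1] /eqP t2].
apply/implyP => nef.
case: (boolP (pdisj (ends e) (ends f))) => // hd; exfalso.
apply: (par_cross hh1 nef ce).
move: hd; rewrite /pdisj !negb_and !negbK.
have pe : forall p q : V * V, p.1 = q.1 -> p.2 = q.2 -> p == q.
  by move=> [? ?] [? ?] /= -> ->.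
case/or4P => /eqP h.
- by apply/orP; left; apply: pe; [rewrite h | rewrite -t1 -h s1].
- by apply/orP; right; apply: pe; [rewrite /= -t2 -h s1 | rewrite /= h].
- by apply/orP; right; apply: pe; [rewrite /= h | rewrite /= -t1 -h s2].
- by apply/orP; left; apply: pe; [rewrite -t2 -h s2 | rewrite h].
Qed.

Section PerF.
Variables (F : {set E}) (tau : {perm V}).
Hypothesis hF : cross_matching ends V1 F.
Local Notation U := (endpoints ends F).
Hypothesis Ta : forall x, x \notin U -> tau x = x.
Hypothesis Tb : forall e, e \in F -> tau (ends e).1 = (ends e).2 /\ tau (ends e).2 = (ends e).1.
Hypothesis Tsign : odd_perm tau = odd #|F|.
Hypothesis Tcard : #|U| = (2 * #|F|)%N.

Let A := V1 :\: U.
Let B := ~: V1 :\: U.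

Lemma TU x : x \in U -> exists2 e, e \in F &
  ((x = (ends e).1 /\ tau x = (ends e).2) \/ (x = (ends e).2 /\ tau x = (ends e).1)).
Proof.
rewrite inE => /existsP [e /andP [eF /orP [] /eqP ->]]; exists e => //; have [h1 h2] := Tb eF.
  by left.
by right.
Qed.

Lemma endU e : e \in F -> ((ends e).1 \in U) && ((ends e).2 \in U).
Proof. by move=> eF; rewrite !inE; apply/andP; split; apply/existsP; exists e; rewrite eF eqxx ?orbT. Qed.

Lemma tauU x : x \in U -> tau x \in U.
Proof.
move=> /TU [e eF [[_ ->]|[_ ->]]]; by case/andP: (endU eF).
Qed.

Lemma tauK x : tau (tau x) = x.
Proof.
case: (boolP (x \in U)) => xU; last by rewrite !Ta.
case: (TU xU) => e eF [[-> h]|[-> h]]; have [h1 h2] := Tb eF.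
  by rewrite h1 h2.
by rewrite h2 h1.
Qed.

Lemma tau2 : (tau * tau)%g = 1%g.
Proof. by apply/permP => x; rewrite permM tauK perm1. Qed.

Lemma inAB x : (x \in A :|: B) = (x \notin U).
Proof. by rewrite /A /B !in_setU !in_setD in_setC; case: (x \in U); case: (x \in V1). Qed.

Lemma disjAB : [disjoint A & B].
Proof.
rewrite -setI_eq0; apply/eqP/setP => x; rewrite /A /B !inE.
by case: (x \in V1); rewrite ?andbF.
Qed.

Lemma PhiQ s : w s != 0 -> (Phi s == F) = QAB A B (tau * s)%g.
Proof.
move=> ws; have gd := good ws.
apply/idP/idP.
  move/eqP => hP.
  have inP : forall e, e \in F -> s (ends e).1 = (ends e).2 /\ s (ends e).2 = (ends e).1.
    by move=> e; rewrite -hP inE => /andP [/andP [_ /eqP ->] /eqP ->].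
  have fixU : forall x, x \in U -> (tau * s)%g x = x.
    move=> x /TU [e eF [[hx ht]|[hx ht]]]; rewrite permM ht hx; have [h1 h2] := inP e eF; by rewrite ?h1 ?h2.
  have side : forall x, x \notin U -> (s x \in V1) = (x \in V1).
    move=> x xU; apply/eqP; apply: contraNT xU => cx.
    have cx' : (x \in V1) != (s x \in V1) by rewrite eq_sym.
    have ssx := swap2 hh1 gd cx'.
    have sx : s x != x by apply: contraNneq cx' => ->.
    have := gd x sx; rewrite card_gt0 => /set0Pn [e]; rewrite inE => he.
    have eF : e \in F.
      rewrite -hP inE /cross; case/orP: he => /eqP -> /=; rewrite ?ssx !eqxx ?andbT //.
    by rewrite inE; apply/existsP; exists e; rewrite eF; case/orP: he => /eqP -> /=; rewrite eqxx ?orbT.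
  have sU : forall x, x \notin U -> s x \notin U.
    move=> x xU; apply/negP => /TU [f fF [[h _]|[h _]]]; have [h1 h2] := inP f fF;
      case/andP: (endU fF) => f1 f2.
      have hx : (ends f).2 = x by apply: (@perm_inj _ s); rewrite h2 h.
      by move: xU; rewrite -hx f2.
    have hx : (ends f).1 = x by apply: (@perm_inj _ s); rewrite h1 h.
    by move: xU; rewrite -hx f1.
  apply/andP; split.
    apply/subsetP => x; rewrite inE inAB; apply: contraNN => xU.
    by rewrite fixU // eqxx.
  apply/forallP => x; case: (boolP (x \in U)) => xU; first by rewrite fixU.
  by rewrite permM Ta // /A !in_setD side // (negbTE (sU x xU)) (negbTE xU).
move=> Q; have hQ := Q; case/andP: hQ => hon /forallP hside.
have fU : forall x, x \in U -> (tau * s)%g x = x.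
  by move=> x xU; rewrite (out_perm hon) // inAB xU.
have sE : forall y, s y = (tau * s)%g (tau y) by move=> y; rewrite permM tauK.
have key : forall x, x \in U -> tau x = s x.
  by move=> x xU; rewrite sE fU // tauU.
apply/eqP/setP => e; rewrite inE; apply/idP/idP; last first.
  move=> eF; have [h1 h2] := Tb eF; case/andP: (endU eF) => u1 u2.
  by rewrite (cm_cross hF eF) -!key // h1 h2 !eqxx.
case/andP => /andP [ce /eqP s1] /eqP s2.
case: (boolP ((ends e).1 \in U)) => u1.
  have t1 := key _ u1; rewrite s1 in t1.
  case: (TU u1) => f fF [[h1 h2]|[h1 h2]]; case: (eqVneq f e) => [<- //|nef]; exfalso.
    apply: (par_cross hh1 (nef : f != e) (cm_cross hF fF)).
    apply/orP; left; apply/eqP.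
    by rewrite [ends e]surjective_pairing h1 -t1 h2 -surjective_pairing.
  apply: (par_cross hh1 (nef : f != e) (cm_cross hF fF)).
  apply/orP; right; apply/eqP.
  by rewrite [ends e]surjective_pairing h1 -t1 h2.
case: (boolP ((ends e).2 \in U)) => u2.
  have t2 := key _ u2; rewrite s2 in t2.
  by move: u1; rewrite -t2 tauU.
exfalso; have := eqP (hside (ends e).1).
rewrite permM Ta // s1 /A !in_setD (negbTE u1) (negbTE u2) /=.
by move: ce; rewrite /cross => /negP ce /esym /eqP.
Qed.

Lemma wtau r : QAB A B r ->
  w (tau * r)%g = (-1) ^+ #|F| * ((-1) ^+ r * \prod_(x in A :|: B) m x (r x)).
Proof.
move=> Q; case/andP: (Q) => hon _.
rewrite /w odd_permM signr_addb Tsign signr_odd -mulrA; congr (_ * _).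
congr (_ * _).
rewrite (bigID (fun x => x \in U)) /=.
rewrite (eq_bigr (fun _ => -1)); last first.
  move=> x xU; rewrite permM (out_perm hon); last by rewrite inAB tauU.
  have [e eF hx] := TU xU.
  have cx : (x \in V1) != (tau x \in V1).
    have := cm_cross hF eF; rewrite /cross.
    by case: hx => [[-> ->]|[-> ->]]; rewrite // eq_sym.
  have nx : x != tau x by apply: contraNneq cx => <-.
  rewrite /mm (negbTE nx); congr (- _).
  have := nedges_le1 hh1 cx; rewrite leq_eqVlt ltnS leqn0 => /orP [/eqP -> //|/eqP h0].
  exfalso; move: h0; apply/eqP; rewrite -lt0n card_gt0; apply/set0Pn; exists e.
  rewrite inE; case: hx => [[hx1 hx2]|[hx1 hx2]]; rewrite hx2 hx1 -surjective_pairing eqxx ?orbT //.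
rewrite prodr_const Tcard -signr_odd oddM /= mul1r.
apply: eq_big => [x|x xU]; first by rewrite inAB.
by rewrite permM Ta.
Qed.

Lemma perF : \sum_(s | Phi s == F) w s =
  (-1) ^+ #|F| * (Dm m A * Dm m B).
Proof.
transitivity (\sum_(s | QAB A B (tau * s)%g) w s).
  rewrite big_mkcond [RHS]big_mkcond; apply: eq_bigr => s _.
  case: (eqVneq (w s) 0) => [->|ws]; first by rewrite !if_same.
  by rewrite PhiQ.
rewrite (reindex_inj (mulgI tau)) /=.
under eq_bigl do rewrite mulgA tau2 mul1g.
rewrite -split_sum ?disjAB // mulr_sumr.
by apply: eq_bigr => r Q; rewrite wtau.
Qed.
End PerF.

Lemma gdet_Dm S : gdet n ends S = Dm m S.
Proof. exact: gdetE. Qed.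

Lemma tau_ex F : cross_matching ends V1 F -> exists tau : {perm V},
  [/\ forall x, x \notin endpoints ends F -> tau x = x,
      forall e, e \in F -> tau (ends e).1 = (ends e).2 /\ tau (ends e).2 = (ends e).1,
      odd_perm tau = odd #|F| &
      #|endpoints ends F| = (2 * #|F|)%N].
Proof.
move=> hF; pose l := [seq ends e | e <- enum F].
have pl : pairwise (@pdisj V) l.
  rewrite pairwise_map; apply: pairwise_uniqP; first exact: enum_uniq.
  by move=> e f; rewrite !mem_enum => eF fF nef; apply: cm_disj hF eF fF nef.
have dl : all (fun p : V * V => p.1 != p.2) l.
  by rewrite all_map; apply/allP => e _ /=.
have epE : forall x, ep l x = (x \in endpoints ends F).
  move=> x; rewrite /ep has_map inE; apply/hasP/existsP => [[e eF h]|[e /andP [eF h]]].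
    by exists e; rewrite -mem_enum eF.
  by exists e; rewrite ?mem_enum.
exists (taul l); split.
- by move=> x; rewrite -epE => /taul_out.
- by move=> e eF; apply: taul_in => //; apply: map_f; rewrite mem_enum.
- by rewrite taul_odd // size_map -cardE.
- have -> : endpoints ends F = [set x | ep l x] by apply/setP => x; rewrite [RHS]inE epE.
  by rewrite card_ep // size_map -cardE.
Qed.

Lemma sumPhi F : cross_matching ends V1 F ->
  \sum_(s | Phi s == F) w s = (-1) ^+ #|F| *
    (gdet n ends (V1 :\: endpoints ends F) * gdet n ends (~: V1 :\: endpoints ends F)).
Proof.
move=> hF; have [tau [Ta Tb Ts Tc]] := tau_ex hF.
by rewrite (perF hF Ta Tb Ts Tc) !gdet_Dm.
Qed.

Lemma main_id : gdet n ends [set: V] =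
  \sum_(F : {set E} | cross_matching ends V1 F) (-1) ^+ #|F| *
    (gdet n ends (V1 :\: endpoints ends F) * gdet n ends (~: V1 :\: endpoints ends F)).
Proof.
rewrite gdet_Dm /Dm.
transitivity (\sum_s w s).
  apply: eq_big => [s|s _]; first by apply/subsetP => x; rewrite inE.
  by rewrite /w; congr (_ * _); apply: eq_bigl => x; rewrite inE.
rewrite (partition_big Phi xpredT) //=.
rewrite (bigID (fun F => cross_matching ends V1 F)) /= [X in _ + X]big1 ?addr0.
  by apply: eq_bigr => F hF; rewrite -sumPhi.
move=> F nF; apply: big1 => s /eqP hs.
apply/eqP; apply: contraR nF => _; rewrite -hs; exact: Phi_cm.
Qed.
End Main.
End Aux.
Import Aux.

Theorem lemma2p4 (R : realFieldType) (V E : finType) (n : V -> R)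
    (ends : E -> V * V) (V1 V2 : {set V})
    (noloop : forall e : E, (ends e).1 != (ends e).2)
    (hpart : V2 = ~: V1)
    (hh1 : h1 ends [set: E] =
           (h1 ends (induced_edges ends V1) + h1 ends (induced_edges ends V2))%N) :
  gdet n ends [set: V] =
    gdet n ends V1 * gdet n ends V2
    + \sum_(F : {set E} | cross_matching ends V1 F && (0 < #|F|)%N)
        (-1) ^+ #|F| * gdet n ends (V1 :\: endpoints ends F)
                     * gdet n ends (V2 :\: endpoints ends F).
Proof.
subst V2.
rewrite (main_id n noloop hh1).
have cm0 : cross_matching ends V1 set0.
  by apply/andP; split; apply/forallP => e; rewrite inE.
rewrite (bigD1 set0) //=.
have -> : endpoints ends set0 = set0.
  by apply/setP => x; rewrite !inE; apply/existsP => [[e]]; rewrite inE.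
rewrite cards0 expr0 mul1r !setD0; congr (_ + _).
apply: eq_big => [F|F _]; last by rewrite mulrA.
by rewrite card_gt0.
Qed.
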